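(* Let $t,\alpha,\lambda>0$ and $n$ be given. For a differentiable function $R(t)$ define $$r(t)=\frac{tR'(t)+\lambda-R(t)\big(t+2n+\alpha+\lambda-tR(t)\big)}{2},\quad \beta^*(t)=\frac{1}{1-R(t)}\left(n(\alpha+n)+\frac{r(t)^2-\lambda r(t)}{R(t)}+(\alpha+\lambda+2n)r(t)\right),$$ $$\Sigma(t)=\frac{n(\alpha+\lambda+n)-t\,r(t)-\beta^*(t)}{t},$$ and consider the equation $$P''(z)+\left(\frac{\alpha+1}{z}+\frac{\lambda+1}{z+t}-1-\frac{1}{z+t[1-R(t)]}\right)P'(z)+\left(\frac{t(r(t)+nR(t))}{z(z+t)(z+t(1-R(t)))}+\frac{n-\Sigma(t)}{z}+\frac{\Sigma(t)}{z+t}\right)P(z)=0.\quad(\ast)$$ If $R$ satisfies the Riccati equation $tR'(t)=tR(t)^2-(\alpha+\lambda+t)R(t)+\lambda$, with solution $$R(t)=\frac{\alpha C_2U(\alpha+1,\alpha+\lambda+1,t)+L_{-\alpha-1}^{\alpha+\lambda}(t)}{C_2U(\alpha,\alpha+\lambda,t)+L_{-\alpha}^{\alpha+\lambda-1}(t)}+1$$ for a constant $C_2$, then for a solution $P$ of $(\ast)$ the function $\widetilde P(u):=P(-tu)$ satisfies $$\widetilde P''(u)+\left(\frac{\tilde\gamma+1}{u}+\frac{\tilde\delta+1}{u-1}+\tilde\epsilon-\frac{\tilde\alpha}{\tilde\alpha u-\tilde q}\right)\widetilde P'(u)+\frac{(\tilde\alpha+\tilde\epsilon)(\tilde\alpha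 u^2-2\tilde qu)+\tilde\alpha\tilde\gamma+\tilde q^2-\tilde q(\tilde\gamma+\tilde\delta-\tilde\epsilon)}{u(u-1)(\tilde\alpha u-\tilde q)}\widetilde P(u)=0$$ (the equation satisfied by the derivative of a confluent Heun function) with $\tilde\gamma=\alpha$, $\tilde\delta=\lambda$, $\tilde\epsilon=t$, $\tilde q=-(n+1)t(1-R(t))$, $\tilde\alpha=-(n+1)t$.
   Context: $U(a,b,x)$ is the Kummer confluent hypergeometric function of the second kind and $L_\nu^{a}(x)$ is the generalized Laguerre function. Equation $(\ast)$ is the second-order ODE satisfied by the monic polynomials orthogonal with respect to $x^\alpha(x+t)^\lambda e^{-x}$ on $[0,\infty)$ when $R$ is the auxiliary quantity $R_n(t)=\frac{\lambda}{h_n}\int_0^\infty\frac{P_n^2(x)}{x+t}x^\alpha(x+t)^\lambda e^{-x}dx$; here it is regarded as an equation determined by an arbitrary function $R$. *)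

(* Defs.v *)
From Stdlib Require Import Reals.
From Coquelicot Require Import Coquelicot.
Open Scope R_scope.

(* r(t), given the values Rv = Rv(t), dR = Rv'(t). *)
Definition r_aux (n : nat) (al la t Rv dR : R) : R :=
  (t * dR + la - Rv * (t + 2 * INR n + al + la - t * Rv)) / 2.

Definition beta_star (n : nat) (al la t Rv dR : R) : R :=
  let r := r_aux n al la t Rv dR in
  / (1 - Rv) * (INR n * (al + INR n) + (r ^ 2 - la * r) / Rv
               + (al + la + 2 * INR n) * r).

Definition Sigma_aux (n : nat) (al la t Rv dR : R) : R :=
  (INR n * (al + la + INR n) - t * r_aux n al la t Rv dR
   - beta_star n al la t Rv dR) / t.

(* Left-hand side of equation (star) at the point z, for P with first and
   second derivatives P1 = P'(z), P2 = P''(z). *)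
Definition eqStar_lhs (n : nat) (al la t Rv dR : R) (z P0 P1 P2 : R) : R :=
  let r := r_aux n al la t Rv dR in
  let S := Sigma_aux n al la t Rv dR in
  P2 + ((al + 1) / z + (la + 1) / (z + t) - 1 - 1 / (z + t * (1 - Rv))) * P1
     + (t * (r + INR n * Rv) / (z * (z + t) * (z + t * (1 - Rv)))
        + (INR n - S) / z + S / (z + t)) * P0.

Definition heunDeriv_lhs (ga de ep q a : R) (u P0 P1 P2 : R) : R :=
  P2 + ((ga + 1) / u + (de + 1) / (u - 1) + ep - a / (a * u - q)) * P1
     + ((a + ep) * (a * u ^ 2 - 2 * q * u) + a * ga + q ^ 2
        - q * (ga + de - ep)) / (u * (u - 1) * (a * u - q)) * P0.

(* Main.v *)
Require Import Defs.
From Stdlib Require Import Reals Lra.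
From Coquelicot Require Import Coquelicot.
Open Scope R_scope.

Lemma chain_lin (f : R -> R) (c x : R) :
  ex_derive f (c * x) -> is_derive (fun v => f (c * v)) x (c * Derive f (c * x)).
Proof.
  intros H.
  apply Derive_correct in H.
  assert (Hl : is_derive (fun v => c * v) x c).
  { auto_derive; auto; ring. }
  pose proof (is_derive_comp f (fun v => c * v) x _ _ H Hl) as Hc.
  exact Hc.
Qed.

Theorem mainTheorem13 (n : nat) (al la t : R) (Rf : R -> R)
  (P : R -> R) (D : R -> Prop) :
  0 < t -> 0 < al -> 0 < la ->
  (* R is differentiable and satisfies the Riccati equation on t > 0 *)
  (forall s, 0 < s -> ex_derive Rf s /\
     s * Derive Rf s = s * Rf s ^ 2 - (al + la + s) * Rf s + la) ->
  (* the expressions defining r, beta^*, Sigma are well defined at t *)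
  Rf t <> 0 -> Rf t <> 1 ->
  (* P is a (twice differentiable) solution of equation (star) on the open set D *)
  open D ->
  (forall z, D z -> ex_derive P z /\ ex_derive (Derive P) z) ->
  (forall z, D z -> z <> 0 -> z + t <> 0 -> z + t * (1 - Rf t) <> 0 ->
     eqStar_lhs n al la t (Rf t) (Derive Rf t)
       z (P z) (Derive P z) (Derive (Derive P) z) = 0) ->
  (* then Ptilde(u) = P(-t u) solves the derivative confluent Heun equation *)
  let Pt := fun u => P (- t * u) in
  let qt := - (INR n + 1) * t * (1 - Rf t) in
  let at_ := - (INR n + 1) * t in
  forall u, D (- t * u) -> u <> 0 -> u <> 1 -> at_ * u - qt <> 0 ->
    heunDeriv_lhs al la t qt at_
      u (Pt u) (Derive Pt u) (Derive (Derive Pt) u) = 0.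
Proof.
  intros Ht Hal Hla HR HR0 HR1 HD HP Hstar Pt qt at_ u Hu Hu0 Hu1 Hq.
  assert (Hloc : locally u (fun v => D (- t * v))).
  { assert (Hc : continuous (fun v => - t * v) u).
    { apply (continuity_pt_filterlim (fun v => - t * v) u). reg. }
    apply Hc. apply HD. exact Hu. }
  assert (HD1 : forall v, D (- t * v) -> Derive Pt v = - t * Derive P (- t * v)).
  { intros v Hv. apply is_derive_unique. unfold Pt.
    apply chain_lin. apply HP. exact Hv. }
  assert (E1 : Derive Pt u = - t * Derive P (- t * u)) by (apply HD1; exact Hu).
  assert (E2 : Derive (Derive Pt) u = t ^ 2 * Derive (Derive P) (- t * u)).
  { rewrite (Derive_ext_loc (Derive Pt) (fun v => - t * Derive P (- t * v)) u).
    - apply is_derive_unique.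
      replace (t ^ 2 * Derive (Derive P) (- t * u))
        with (- t * (- t * Derive (Derive P) (- t * u))) by ring.
      apply is_derive_scal. apply chain_lin. apply HP. exact Hu.
    - revert Hloc. apply filter_imp. intros v Hv. apply HD1. exact Hv. }
  destruct (HR t Ht) as [_ Hric].
  assert (HnN : INR n + 1 <> 0) by (pose proof (pos_INR n); lra).
  assert (Hz : - t * u <> 0) by (intro H; apply Hu0; nra).
  assert (Hzt : - t * u + t <> 0).
  { intro H. apply Hu1. apply (Rmult_eq_reg_l t); lra. }
  assert (Hz3 : - t * u + t * (1 - Rf t) <> 0).
  { intro H. apply Hq. unfold at_, qt.
    replace (- (INR n + 1) * t * u - - (INR n + 1) * t * (1 - Rf t))
      with ((INR n + 1) * (- t * u + t * (1 - Rf t))) by ring.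
    rewrite H; ring. }
  pose proof (Hstar (- t * u) Hu Hz Hzt Hz3) as Hs.
  assert (HdR : Derive Rf t = (t * Rf t ^ 2 - (al + la + t) * Rf t + la) / t).
  { field_simplify_eq; lra. }
  rewrite HdR in Hs.
  rewrite E1, E2. unfold Pt.
  set (A := Derive (Derive P) (- t * u)) in *.
  set (B := Derive P (- t * u)) in *.
  set (C := P (- t * u)) in *.
  set (Rv := Rf t) in *.
  unfold eqStar_lhs, Sigma_aux, beta_star, r_aux in Hs.
  unfold heunDeriv_lhs, qt, at_.
  assert (Hq' : - (INR n + 1) * t * u - - (INR n + 1) * t * (1 - Rv) <> 0) by exact Hq.
  assert (Ht0 : t <> 0) by lra.
  assert (H1R : 1 - Rv <> 0) by lra.
  assert (Hu1' : u - 1 <> 0) by lra.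
  transitivity (t ^ 2 * 0); [| ring].
  rewrite <- Hs.
  field; repeat split; auto.
Qed.
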